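(* Let $a_0,\dots,a_4,b_0,\dots,b_4>0$. Assume $Q<0$, $z_0>0$ (so that $\xi^{ext}_1,\dots,\xi^{ext}_4$ are real) and $\xi_{min}>0$. If $P_5(\xi_{min})>0$ and $P_5(\xi_{max})<0$, then the quartic operator $\mathcal{Q}$ has at least three fixed points in $\mathbb{R}_>^2$, i.e. $N_>^{fix}(\mathcal{Q})\ge 3$.
   Context: Quartic operator on $\mathbb{R}_+^2=\{(x,y):x\ge0,y\ge0\}$: $\mathcal{Q}(x,y)=\big(\sum_{i=0}^4\binom{4}{i}a_i x^{4-i}y^i,\ \sum_{i=0}^4\binom{4}{i}b_i x^{4-i}y^i\big)$; $\mathbb{R}_>^2=\{(x,y):x>0,y>0\}$; $N_>^{fix}(\mathcal{Q})$ is the number of fixed points of $\mathcal{Q}$ in $\mathbb{R}_>^2$. Set $\mu_0=a_4$, $\mu_1=4a_3-b_4$, $\mu_2=6a_2-4b_3$, $\mu_3=4a_1-6b_2$, $\mu_4=a_0-4b_1$, $\mu_5=b_0$, and $P_5(\xi)=\mu_0\xi^5+\mu_1\xi^4+\mu_2\xi^3+\mu_3\xi^2+\mu_4\xi-\mu_5$. Define $p=\frac{15\mu_0\mu_2-6\mu_1^2}{25\mu_0^2}$, $q=\frac{50\mu_0^2\mu_3+8\mu_1^3-30\mu_0\mu_1\mu_2}{125\mu_0^3}$, $r=\frac{15\mu_0\mu_1^2\mu_2-50\mu_0^2\mu_1\mu_3-3\mu_1^4+125\mu_0^3\mu_4}{625\mu_0^4}$ (so that $\omega^4+p\omega^2+q\omega+r=P_5'(\omega-\frac{\mu_1}{5\mu_0})/(5\mu_0)$),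 $a=-\frac{p^2}{12}-r$, $b=-\frac{p^3}{108}+\frac{pr}{3}-\frac{q^2}{8}$, $Q=(a/3)^3+(b/2)^2$. When $Q<0$ (hence $a<0$), let $\alpha\in[0,\pi]$ with $\cos\alpha=-\frac{b}{2}\left(-\frac{3}{a}\right)^{3/2}$ and $z_0=2\sqrt{-a/3}\,\cos\!\left(\frac{2\pi}{3}+\frac{\alpha}{3}\right)-\frac{p}{3}$. For $z_0>0$ put $\xi^{ext}_{1,2}=\frac12\Big(\sqrt{2z_0}\pm\sqrt{2z_0-4\big(\frac p2+z_0+\frac{q}{2\sqrt{2z_0}}\big)}\Big)-\frac{\mu_1}{5\mu_0}$, $\xi^{ext}_{3,4}=\frac12\Big(-\sqrt{2z_0}\pm\sqrt{2z_0-4\big(\frac p2+z_0-\frac{q}{2\sqrt{2z_0}}\big)}\Big)-\frac{\mu_1}{5\mu_0}$, and $\xi_{min}=\min_j\xi^{ext}_j$, $\xi_{max}=\max_j\xi^{ext}_j$. *)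

(* Defs.v *)
From Stdlib Require Import Reals.
Open Scope R_scope.

Definition binom4 (i : nat) : R :=
  match i with 0 => 1 | 1 => 4 | 2 => 6 | 3 => 4 | 4 => 1 | _ => 0 end.

Definition quartic_form (c : nat -> R) (x y : R) : R :=
  binom4 0 * c 0%nat * x^4 + binom4 1 * c 1%nat * x^3 * y
  + binom4 2 * c 2%nat * x^2 * y^2 + binom4 3 * c 3%nat * x * y^3
  + binom4 4 * c 4%nat * y^4.

Definition quartic_op (a b : nat -> R) (p : R * R) : R * R :=
  (quartic_form a (fst p) (snd p), quartic_form b (fst p) (snd p)).

Definition pos_fixed_point (a b : nat -> R) (p : R * R) : Prop :=
  0 < fst p /\ 0 < snd p /\ quartic_op a b p = p.

Section Params.
Variables (a b : nat -> R).

Definition mu0 := a 4%nat.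
Definition mu1 := 4 * a 3%nat - b 4%nat.
Definition mu2 := 6 * a 2%nat - 4 * b 3%nat.
Definition mu3 := 4 * a 1%nat - 6 * b 2%nat.
Definition mu4 := a 0%nat - 4 * b 1%nat.
Definition mu5 := b 0%nat.

Definition P5 (xi : R) : R :=
  mu0 * xi^5 + mu1 * xi^4 + mu2 * xi^3 + mu3 * xi^2 + mu4 * xi - mu5.

Definition pp := (15 * mu0 * mu2 - 6 * mu1^2) / (25 * mu0^2).
Definition qq := (50 * mu0^2 * mu3 + 8 * mu1^3 - 30 * mu0 * mu1 * mu2) / (125 * mu0^3).
Definition rr := (15 * mu0 * mu1^2 * mu2 - 50 * mu0^2 * mu1 * mu3 - 3 * mu1^4
                  + 125 * mu0^3 * mu4) / (625 * mu0^4).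
Definition aa := - pp^2 / 12 - rr.
Definition bb := - pp^3 / 108 + pp * rr / 3 - qq^2 / 8.
Definition QQ := (aa / 3)^3 + (bb / 2)^2.

Definition alpha := acos (- (bb / 2) * (sqrt (- 3 / aa))^3).
Definition z0 := 2 * sqrt (- aa / 3) * cos (2 * PI / 3 + alpha / 3) - pp / 3.

Definition shift := mu1 / (5 * mu0).
Definition s2z := sqrt (2 * z0).

Definition xi1 := (s2z + sqrt (2 * z0 - 4 * (pp / 2 + z0 + qq / (2 * s2z)))) / 2 - shift.
Definition xi2 := (s2z - sqrt (2 * z0 - 4 * (pp / 2 + z0 + qq / (2 * s2z)))) / 2 - shift.
Definition xi3 := (- s2z + sqrt (2 * z0 - 4 * (pp / 2 + z0 - qq / (2 * s2z)))) / 2 - shift.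
Definition xi4 := (- s2z - sqrt (2 * z0 - 4 * (pp / 2 + z0 - qq / (2 * s2z)))) / 2 - shift.

Definition xi_min := Rmin (Rmin xi1 xi2) (Rmin xi3 xi4).
Definition xi_max := Rmax (Rmax xi1 xi2) (Rmax xi3 xi4).
End Params.

(* Main.v *)
Require Import Defs.
From Stdlib Require Import Reals Lra Psatz.
Open Scope R_scope.

Lemma P5_cont (a b : nat -> R) : continuity (P5 a b).
Proof. unfold P5. reg. Qed.

Lemma term_bound (m t : R) (k : nat) : 1 <= t -> (k <= 4)%nat ->
  m * t ^ k >= - Rabs m * t ^ 4.
Proof.
  intros Ht Hk.
  pose proof (Rle_pow t k 4 Ht Hk) as H1.
  assert (H0 : 0 <= t ^ k) by (apply pow_le; lra).
  pose proof (Rabs_pos m).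
  pose proof (Rle_abs m). pose proof (Rle_abs (-m)). rewrite Rabs_Ropp in *.
  nra.
Qed.

Lemma P5_large (a b : nat -> R) (t : R) : 0 < mu0 a -> 1 <= t ->
  (Rabs (mu1 a b) + Rabs (mu2 a b) + Rabs (mu3 a b) + Rabs (mu4 a b) + Rabs (mu5 b)) / mu0 a < t ->
  0 < P5 a b t.
Proof.
  intros H0 Ht Hl.
  set (S := Rabs (mu1 a b) + Rabs (mu2 a b) + Rabs (mu3 a b) + Rabs (mu4 a b) + Rabs (mu5 b)) in *.
  assert (HS : S < mu0 a * t).
  { apply (Rmult_lt_compat_l (mu0 a)) in Hl; auto.
    unfold Rdiv in Hl. rewrite <- Rmult_assoc, (Rmult_comm (mu0 a) S), Rmult_assoc,
      Rinv_r, Rmult_1_r in Hl; lra. }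
  pose proof (term_bound (mu1 a b) t 4 Ht ltac:(lia)).
  pose proof (term_bound (mu2 a b) t 3 Ht ltac:(lia)).
  pose proof (term_bound (mu3 a b) t 2 Ht ltac:(lia)).
  pose proof (term_bound (mu4 a b) t 1 Ht ltac:(lia)).
  pose proof (term_bound (- mu5 b) t 0 Ht ltac:(lia)).
  rewrite Rabs_Ropp in *.
  assert (Ht4 : 1 <= t ^ 4) by (apply pow_R1_Rle; lra).
  assert (Hp : 0 < t ^ 4 * (mu0 a * t - S)) by (apply Rmult_lt_0_compat; lra).
  unfold P5. simpl pow in *. unfold S in Hp. nra.
Qed.

Lemma fixed_from_root (a b : nat -> R) (xi : R) :
  (forall i : nat, (i <= 4)%nat -> 0 < a i /\ 0 < b i) ->
  0 < xi -> P5 a b xi = 0 ->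
  exists x, 0 < x /\ pos_fixed_point a b (x, xi * x).
Proof.
  intros Hab Hxi HP.
  destruct (Hab 0%nat ltac:(lia)) as [a0 _].
  destruct (Hab 1%nat ltac:(lia)) as [a1 _].
  destruct (Hab 2%nat ltac:(lia)) as [a2 _].
  destruct (Hab 3%nat ltac:(lia)) as [a3 _].
  destruct (Hab 4%nat ltac:(lia)) as [a4 _].
  set (A := a 0%nat + 4 * a 1%nat * xi + 6 * a 2%nat * xi^2 + 4 * a 3%nat * xi^3 + a 4%nat * xi^4).
  assert (HA : 0 < A).
  { unfold A. assert (0 < xi^2) by (apply pow_lt; lra).
    assert (0 < xi^3) by (apply pow_lt; lra). assert (0 < xi^4) by (apply pow_lt; lra).
    assert (0 < a 1%nat * xi) by nra. assert (0 < a 2%nat * xi^2) by nra.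
    assert (0 < a 3%nat * xi^3) by nra. assert (0 < a 4%nat * xi^4) by nra. lra. }
  set (x := Rpower A (- (1/3))).
  assert (Hx : 0 < x) by (unfold x, Rpower; apply exp_pos).
  assert (Hx3 : x ^ 3 * A = 1).
  { rewrite <- Rpower_pow by exact Hx. unfold x. rewrite Rpower_mult.
    replace (- (1/3) * INR 3) with (Ropp 1) by (simpl; field).
    rewrite Rpower_Ropp, Rpower_1 by exact HA. field. lra. }
  exists x. split; [exact Hx|]. split; [exact Hx|]. split; [simpl; nra|].
  unfold quartic_op, quartic_form, binom4; simpl fst; simpl snd.
  f_equal.
  - transitivity (x * (x ^ 3 * A)); [unfold A; ring | rewrite Hx3; ring].
  - unfold P5, mu0, mu1, mu2, mu3, mu4, mu5 in HP.
    transitivity (xi * x * (x ^ 3 * A) - x ^ 4 * P5 a b xi).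
    + unfold A, P5, mu0, mu1, mu2, mu3, mu4, mu5. ring.
    + unfold P5, mu0, mu1, mu2, mu3, mu4, mu5. rewrite HP, Hx3. ring.
Qed.

Theorem theorem3 (a b : nat -> R) :
  (forall i : nat, (i <= 4)%nat -> 0 < a i /\ 0 < b i) ->
  QQ a b < 0 ->
  0 < z0 a b ->
  0 < xi_min a b ->
  0 < P5 a b (xi_min a b) ->
  P5 a b (xi_max a b) < 0 ->
  exists p1 p2 p3 : R * R,
    pos_fixed_point a b p1 /\ pos_fixed_point a b p2 /\ pos_fixed_point a b p3 /\
    p1 <> p2 /\ p1 <> p3 /\ p2 <> p3.
Proof.
  intros Hab _ _ Hmin Pmin Pmax.
  set (m := xi_min a b) in *. set (M := xi_max a b) in *.
  destruct (Hab 0%nat ltac:(lia)) as [_ b0].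
  destruct (Hab 4%nat ltac:(lia)) as [a4 _].
  assert (P0 : P5 a b 0 < 0) by (unfold P5, mu5; simpl; lra).
  assert (HmM : m < M).
  { destruct (Rle_lt_dec M m) as [h|h]; [|exact h].
    assert (m <= M).
    { unfold m, M, xi_min, xi_max.
      pose proof (Rmin_l (Rmin (xi1 a b) (xi2 a b)) (Rmin (xi3 a b) (xi4 a b))).
      pose proof (Rmin_l (xi1 a b) (xi2 a b)).
      pose proof (Rmax_l (Rmax (xi1 a b) (xi2 a b)) (Rmax (xi3 a b) (xi4 a b))).
      pose proof (Rmax_l (xi1 a b) (xi2 a b)). lra. }
    assert (Hem : m = M) by lra. rewrite Hem in Pmin. lra. }
  set (S := (Rabs (mu1 a b) + Rabs (mu2 a b) + Rabs (mu3 a b) + Rabs (mu4 a b) + Rabs (mu5 b)) / mu0 a).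
  set (T := Rmax 1 (Rmax (M + 1) (S + 1))).
  assert (HT1 : 1 <= T) by apply Rmax_l.
  assert (HT2 : M + 1 <= T) by (unfold T; eapply Rle_trans; [apply Rmax_l|apply Rmax_r]).
  assert (HT3 : S + 1 <= T) by (unfold T; eapply Rle_trans; [apply Rmax_r|apply Rmax_r]).
  assert (PT : 0 < P5 a b T).
  { apply P5_large; [unfold mu0; exact a4 | exact HT1 | fold S; lra]. }
  destruct (IVT (P5 a b) 0 m (P5_cont a b) Hmin P0 Pmin) as [z1 [Hz1 E1]].
  assert (Hc : continuity (fun t => - P5 a b t)) by (apply continuity_opp, P5_cont).
  destruct (IVT (fun t => - P5 a b t) m M Hc HmM ltac:(lra) ltac:(lra)) as [z2 [Hz2 E2]].
  destruct (IVT (P5 a b) M T (P5_cont a b) ltac:(lra) Pmax PT) as [z3 [Hz3 E3]].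
  assert (z1 <> 0) by (intro; subst; lra).
  assert (z1 <> m) by (intro; subst; lra).
  assert (z2 <> m) by (intro; subst; lra).
  assert (z2 <> M) by (intro; subst; lra).
  assert (z3 <> M) by (intro; subst; lra).
  assert (E2' : P5 a b z2 = 0) by lra.
  destruct (fixed_from_root a b z1 Hab ltac:(lra) E1) as [x1 [Hx1 F1]].
  destruct (fixed_from_root a b z2 Hab ltac:(lra) E2') as [x2 [Hx2 F2]].
  destruct (fixed_from_root a b z3 Hab ltac:(lra) E3) as [x3 [Hx3 F3]].
  exists (x1, z1 * x1), (x2, z2 * x2), (x3, z3 * x3).
  split; [exact F1|]. split; [exact F2|]. split; [exact F3|].
  split; [|split]; intro Heq; injection Heq; intros e1 e2; subst.
  - assert (z1 = z2) by (apply (Rmult_eq_reg_r x2); lra). lra.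
  - assert (z1 = z3) by (apply (Rmult_eq_reg_r x3); lra). lra.
  - assert (z2 = z3) by (apply (Rmult_eq_reg_r x3); lra). lra.
Qed.
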